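(* Let $f$ and $g$ be transcendental entire functions with $f\circ g=g\circ f$, and suppose there is a polynomial $P$ of degree at least $2$ such that $P\circ f=f\circ g$. If $U\subset BU(f)$, then $g^{-1}(U)\subset BU(f)$.
   Context: For an entire function $f$, $f^n$ denotes the $n$-th iterate. The escaping set is $I(f)=\{z\in\mathbb{C}: f^n(z)\to\infty \text{ as } n\to\infty\}$, $K(f)=\{z\in\mathbb{C}: \exists R>0,\ |f^n(z)|\le R \text{ for all } n\ge 0\}$, and the Bungee set is $BU(f)=\mathbb{C}\setminus (I(f)\cup K(f))$. $g^{-1}(U)$ denotes the full preimage $\{z: g(z)\in U\}$. *)

(* Defs.v *)
From Stdlib Require Import Reals List.
From Coquelicot Require Import Coquelicot.
Open Scope R_scope.

Definition entire (f : C -> C) : Prop :=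
  forall z : C, @ex_derive C_AbsRing C_NormedModule f z.

(* evaluation of the polynomial with coefficients l = [a0; a1; ...; an] *)
Definition peval (l : list C) (z : C) : C :=
  fold_right (fun a acc => Cplus a (Cmult z acc)) (RtoC 0) l.

Definition is_polynomial (f : C -> C) : Prop :=
  exists l : list C, forall z, f z = peval l z.

Definition transcendental_entire (f : C -> C) : Prop :=
  entire f /\ ~ is_polynomial f.

Definition poly_deg_ge2 (P : C -> C) : Prop :=
  exists l : list C, (3 <= length l)%nat /\ last l (RtoC 0) <> RtoC 0 /\
    forall z, P z = peval l z.

Definition iter (f : C -> C) (n : nat) (z : C) : C := Nat.iter n f z.

Definition escaping (f : C -> C) (z : C) : Prop :=
  forall M : R, exists N : nat, forall n : nat, (N <= n)%nat -> M < Cmod (iter f n z).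

Definition bounded_orbit (f : C -> C) (z : C) : Prop :=
  exists R0 : R, 0 < R0 /\ forall n : nat, Cmod (iter f n z) <= R0.

Definition bungee (f : C -> C) (z : C) : Prop :=
  ~ escaping f z /\ ~ bounded_orbit f z.

(* Main.v *)
Require Import Defs.
From Stdlib Require Import Reals List Lra Lia.
From Coquelicot Require Import Coquelicot.
Open Scope R_scope.

Lemma peval_cons a l w : peval (a :: l) w = Cplus a (Cmult w (peval l w)).
Proof. reflexivity. Qed.

Lemma rev_tri (a b : C) : Cmod b - Cmod a <= Cmod (Cplus a b).
Proof.
  assert (H : b = Cplus (Cplus a b) (Copp a)) by ring.
  assert (H2 := Cmod_triangle (Cplus a b) (Copp a)).
  rewrite <- H, Cmod_opp in H2. lra.
Qed.

Lemma peval_bound l R0 : 0 <= R0 -> exists B, 0 <= B /\ forall w, Cmod w <= R0 -> Cmod (peval l w) <= B.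
Proof.
  intros HR. induction l as [|a l IH].
  - exists 0. split; [lra|]. intros w _. simpl. rewrite Cmod_0. lra.
  - destruct IH as [B [HB IH]]. exists (Cmod a + R0 * B). split.
    + pose proof (Cmod_ge_0 a). nra.
    + intros w Hw. rewrite peval_cons.
      eapply Rle_trans; [apply Cmod_triangle|]. rewrite Cmod_mult.
      specialize (IH w Hw). pose proof (Cmod_ge_0 w). pose proof (Cmod_ge_0 (peval l w)).
      assert (Cmod w * Cmod (peval l w) <= R0 * B) by (apply Rmult_le_compat; lra).
      lra.
Qed.

Lemma peval_away l : last l (RtoC 0) <> RtoC 0 ->
  exists c K, 0 < c /\ forall w, K <= Cmod w -> c <= Cmod (peval l w).
Proof.
  induction l as [|a l IH]; intros Hl.
  - simpl in Hl. congruence.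
  - destruct l as [|b l'].
    + simpl in Hl. exists (Cmod a), 0. split.
      * apply Cmod_gt_0. exact Hl.
      * intros w _. rewrite peval_cons. simpl.
        replace (Cplus a (Cmult w (RtoC 0))) with a by ring. lra.
    + assert (Hl' : last (b :: l') (RtoC 0) <> RtoC 0) by (simpl in Hl |- *; exact Hl).
      destruct (IH Hl') as [c [K [Hc HK]]].
      exists c, (Rmax K ((Cmod a + c) / c)). split; [exact Hc|].
      intros w Hw. rewrite peval_cons.
      eapply Rle_trans; [|apply rev_tri]. rewrite Cmod_mult.
      assert (H1 : K <= Cmod w) by (eapply Rle_trans; [apply Rmax_l|exact Hw]).
      assert (H2 : (Cmod a + c) / c <= Cmod w) by (eapply Rle_trans; [apply Rmax_r|exact Hw]).
      specialize (HK w H1).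
      assert (H3 : Cmod a + c <= Cmod w * c).
      { apply (Rmult_le_compat_r c) in H2; [|lra].
        unfold Rdiv in H2. rewrite Rmult_assoc, Rinv_l, Rmult_1_r in H2; lra. }
      pose proof (Cmod_ge_0 w).
      assert (Cmod w * c <= Cmod w * Cmod (peval (b :: l') w)) by (apply Rmult_le_compat_l; lra).
      lra.
Qed.

Lemma peval_grow l : (2 <= length l)%nat -> last l (RtoC 0) <> RtoC 0 ->
  forall M, exists K, forall w, K <= Cmod w -> M <= Cmod (peval l w).
Proof.
  intros Hlen Hl M. destruct l as [|a [|b l']]; simpl in Hlen; try lia.
  assert (Hl' : last (b :: l') (RtoC 0) <> RtoC 0) by (simpl in Hl |- *; exact Hl).
  destruct (peval_away _ Hl') as [c [K [Hc HK]]].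
  exists (Rmax K ((Cmod a + M) / c)). intros w Hw. rewrite peval_cons.
  eapply Rle_trans; [|apply rev_tri]. rewrite Cmod_mult.
  assert (H1 : K <= Cmod w) by (eapply Rle_trans; [apply Rmax_l|exact Hw]).
  assert (H2 : (Cmod a + M) / c <= Cmod w) by (eapply Rle_trans; [apply Rmax_r|exact Hw]).
  specialize (HK w H1).
  assert (H3 : Cmod a + M <= Cmod w * c).
  { apply (Rmult_le_compat_r c) in H2; [|lra].
    unfold Rdiv in H2. rewrite Rmult_assoc, Rinv_l, Rmult_1_r in H2; lra. }
  pose proof (Cmod_ge_0 w).
  assert (Cmod w * c <= Cmod w * Cmod (peval (b :: l') w)) by (apply Rmult_le_compat_l; lra).
  lra.
Qed.

Lemma iter_comm (f g : C -> C) : (forall z, f (g z) = g (f z)) ->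
  forall n z, iter f n (g z) = g (iter f n z).
Proof.
  intros H n z. induction n as [|n IH]; [reflexivity|].
  unfold iter in *. simpl. rewrite IH. apply H.
Qed.

Theorem theorem5 (f g P : C -> C) (U : C -> Prop) :
  transcendental_entire f -> transcendental_entire g ->
  (forall z, f (g z) = g (f z)) ->
  poly_deg_ge2 P ->
  (forall z, P (f z) = f (g z)) ->
  (forall z, U z -> bungee f z) ->
  forall z, U (g z) -> bungee f z.
Proof.
  intros _ _ Hcomm [l [Hlen [Hlast HP]]] HPf HU z Hz.
  assert (Key : forall n, iter f (S n) (g z) = P (iter f (S n) z)).
  { intros n. change (iter f (S n) (g z)) with (f (iter f n (g z))).
    rewrite iter_comm by exact Hcomm. rewrite <- HPf. reflexivity. }
  destruct (HU _ Hz) as [Hne Hnb]. split.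
  - intros Hesc. apply Hne. intros M.
    destruct (peval_grow l ltac:(lia) Hlast (M + 1)) as [K HK].
    destruct (Hesc K) as [N HN]. exists (S N). intros n Hn.
    destruct n as [|m]; [lia|]. rewrite Key, HP.
    assert (K <= Cmod (iter f (S m) z)) by (left; apply HN; lia).
    specialize (HK _ H). lra.
  - intros [R0 [HR0 Hb]]. apply Hnb.
    destruct (peval_bound l R0 ltac:(lra)) as [B [HB HBl]].
    exists (Rmax 1 (Rmax B (Cmod (g z)))). split.
    + eapply Rlt_le_trans; [|apply Rmax_l]; lra.
    + intros [|m].
      * eapply Rle_trans; [|apply Rmax_r]. apply Rmax_r.
      * rewrite Key, HP. eapply Rle_trans; [apply HBl, Hb|].
        eapply Rle_trans; [|apply Rmax_r]. apply Rmax_l.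
Qed.
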